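(* Let $\alpha(\cdot)$ and $\beta(\cdot)$ be continuous, positive, integrable functions on $(0,\infty)$ such that $\lim_{u\to\infty}\beta(u)/\alpha(u)=\rho\in[0,\infty]$. Then $$\lim_{z\to\infty}\frac{\int_0^\infty\phi(z;0,u)\beta(u)\,du}{\int_0^\infty\phi(z;0,u)\alpha(u)\,du}=\rho,$$ where $\phi(\cdot;0,u)$ is the $N(0,u)$ density. *)

(* Defs.v *)
From mathcomp Require Import all_boot all_order all_algebra.
From mathcomp Require Import all_classical all_reals all_analysis.
Set Implicit Arguments. Unset Strict Implicit. Unset Printing Implicit Defensive.
Import Order.TTheory GRing.Theory Num.Theory.
Local Open Scope ring_scope.

(* phi(z;0,u): density at z of the normal law N(0,u) with mean 0 and
   VARIANCE u (the library's normal_pdf is parameterised by the standard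
   deviation, hence the square root). *)
Definition phi {R : realType} (z u : R) : R := normal_pdf 0 (Num.sqrt u) z.

(* Main.v *)
Require Import Defs.
From mathcomp Require Import all_boot all_order all_algebra.
From mathcomp Require Import all_classical all_reals all_analysis.
From mathcomp Require Import ring lra measurable_realfun.
Import Order.TTheory GRing.Theory Num.Theory numFieldNormedType.Exports.
Local Open Scope classical_set_scope.
Local Open Scope ring_scope.

Section S.
Context {R : realType}.
Implicit Types z u : R.

Lemma phiE z u : 0 < u ->
  phi z u = Num.sqrt ((u * pi *+ 2)^-1) * expR (- z ^+ 2 / (u *+ 2)).
Proof.
move=> u0; rewrite /phi /normal_pdf ifF; last first.
  by apply/negbTE; rewrite gt_eqF // sqrtr_gt0.
rewrite /normal_peak /normal_fun subr0 sqr_sqrtr ?ltW // sqrtrV //.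
by rewrite mulrn_wge0 // mulr_ge0 ?ltW ?pi_gt0.
Qed.

Lemma sqrt_le_exp (t : R) : 0 <= t -> Num.sqrt t <= expR t.
Proof.
move=> t0; apply: (le_trans _ (expR_ge1Dx t)).
rewrite -(ger0_norm (_ : 0 <= 1 + t)) ?addr_ge0 // -sqrtr_sqr ler_sqrt //.
  nra.
by rewrite sqr_ge0.
Qed.

Lemma phi_ge0 z u : 0 <= phi z u.
Proof. exact: normal_pdf_ge0. Qed.

Lemma phi_ub z u : 1 <= z -> 0 < u -> phi z u <= expR (- z ^+ 2 / (u * 4)).
Proof.
move=> z1 u0; rewrite phiE //.
have e : - z ^+ 2 / (u *+ 2) = - z ^+ 2 / (u * 4) + - z ^+ 2 / (u * 4).
  by field; rewrite gt_eqF.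
rewrite e expRD mulrA ler_piMl ?expR_ge0 //.
set t := (u * 4)^-1.
have t0 : 0 < t by rewrite invr_gt0 mulr_gt0.
apply: (@le_trans _ _ (Num.sqrt t * expR (- t))).
  apply: ler_pM; rewrite ?sqrtr_ge0 ?expR_ge0 //.
    rewrite ler_sqrt ?(ltW t0) // /t lef_pV2 ?posrE ?mulrn_wgt0 ?mulr_gt0 ?pi_gt0 //.
    by have := pi_ge2 R; rewrite -mulr_natr; nra.
  rewrite ler_expR; have z2 : 1 <= z ^+ 2 by rewrite expr_ge1 // (le_trans ler01 z1).
  nra.
by rewrite expRN -ler_pdivlMr ?invr_gt0 ?expR_gt0 // div1r invrK sqrt_le_exp // ltW.
Qed.

Lemma phi_le1 z u : 1 <= z -> 0 < u -> phi z u <= 1.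
Proof.
move=> z1 u0; apply: (le_trans (phi_ub z u z1 u0)); rewrite expR_le1 mulNr oppr_le0.
by rewrite mulr_ge0 ?sqr_ge0 // invr_ge0 mulr_ge0 // ltW.
Qed.

Lemma phi_ubM z u M : 1 <= z -> 0 < u -> u <= M ->
  phi z u <= expR (- z ^+ 2 / (M * 4)).
Proof.
move=> z1 u0 uM; apply: (le_trans (phi_ub z u z1 u0)); rewrite ler_expR !mulNr lerN2.
rewrite ler_pM2l ?exprn_gt0 ?(lt_le_trans ltr01 z1) //.
by rewrite lef_pV2 ?posrE ?mulr_gt0 ?(lt_le_trans u0 uM) // ler_pM2r.
Qed.

Lemma phi_lb z u a b : 0 < a -> a <= u -> u <= b ->
  Num.sqrt ((b * pi *+ 2)^-1) * expR (- z ^+ 2 / (a *+ 2)) <= phi z u.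
Proof.
move=> a0 au ub; have u0 := lt_le_trans a0 au.
rewrite phiE //; apply: ler_pM; rewrite ?sqrtr_ge0 ?expR_ge0 //.
  rewrite ler_sqrt; last by rewrite invr_ge0 mulrn_wge0 // mulr_ge0 ?pi_ge0 // ltW.
  rewrite lef_pV2 ?posrE ?mulrn_wgt0 ?mulr_gt0 ?pi_gt0 // ?(lt_le_trans u0 ub) //.
  by rewrite ler_wMn2r // ler_pM2r ?pi_gt0.
rewrite ler_expR !mulNr lerN2 ler_wpM2l ?sqr_ge0 //.
by rewrite lef_pV2 ?posrE ?mulrn_wgt0 // ler_wMn2r.
Qed.

Definition D : set (measurableTypeR R) := `]0, +oo[%classic.

Lemma measD : measurable D.
Proof. exact: measurable_itv. Qed.

Lemma measurable_inv : measurable_fun D (@GRing.inv R).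
Proof.
apply: open_continuous_measurable_fun; first exact: interval_open.
move=> x; rewrite inE /D /= in_itv /= andbT => x0.
by apply: inv_continuous; rewrite gt_eqF.
Qed.

Lemma measurable_phi z : measurable_fun D (phi z).
Proof.
pose g u := Num.sqrt ((pi *+ 2)^-1 * u^-1) * expR (- z ^+ 2 / 2 * u^-1).
apply: (@eq_measurable_fun _ _ _ _ D g).
  move=> u; rewrite inE /D /= in_itv /= andbT => u0.
  have pi0 : pi != 0 :> R by rewrite gt_eqF ?pi_gt0.
  have u0' : u != 0 by rewrite gt_eqF.
  rewrite phiE // /g; congr (Num.sqrt _ * expR _).
    by rewrite -mulrnAr invfM mulrC.
  by rewrite -mulrA -invfM [2 * u]mulrC mulr_natr.
have h1 : measurable_fun D (fun u : R => Num.sqrt ((pi *+ 2)^-1 * u^-1)).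
  apply: (@measurableT_comp _ _ _ _ _ _ (@Num.sqrt R)).
    by apply: continuous_measurable_fun; exact: sqrt_continuous.
  have hk : measurable_fun setT ( *%R ((pi *+ 2)^-1) : R -> R) by exact: mulrl_measurable.
  exact: (measurableT_comp hk measurable_inv).
have h2 : measurable_fun D (fun u : R => expR (- z ^+ 2 / 2 * u^-1)).
  apply: measurableT_comp; first exact: measurable_expR.
  have hk : measurable_fun setT ( *%R (- z ^+ 2 / 2) : R -> R) by exact: mulrl_measurable.
  exact: (measurableT_comp hk measurable_inv).
exact: (measurable_funM h1 h2).
Qed.

Local Notation mu := (@lebesgue_measure R).
Definition intg (f : R -> R) := mu.-integrable D (EFin \o f).

Lemma intgD f g : intg f -> intg g -> intg (fun u => f u + g u).
Proof.
move=> hf hg; have := integrableD measD hf hg.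
by apply: (eq_integrable measD) => // u _ /=; rewrite EFinD.
Qed.

Lemma intgZ k f : intg f -> intg (fun u => k * f u).
Proof.
move=> hf; have := integrableZl measD k hf.
by apply: (eq_integrable measD) => // u _ /=; rewrite EFinM.
Qed.

Lemma intg_phi z f : 1 <= z -> intg f -> intg (fun u => phi z u * f u).
Proof.
move=> z1 hf; have hb : [bounded phi z x | x in D].
  exists 1; split; first by rewrite num_real.
  move=> M M1 x Dx /=; rewrite ger0_norm ?phi_ge0 //.
  apply: (le_trans (phi_le1 z x z1 _)); last exact: ltW.
  by move: Dx; rewrite /D /= in_itv /= andbT.
have := integrableMr measD (measurable_phi z) hb hf.
by apply: (eq_integrable measD) => // u _ /=; rewrite EFinM.
Qed.

Definition Bi (f : R -> R) := Rintegral mu D f.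
Definition Ii z (f : R -> R) := Rintegral mu D (fun u => phi z u * f u).

Lemma BiD f g : intg f -> intg g -> Bi (fun u => f u + g u) = Bi f + Bi g.
Proof. by move=> hf hg; rewrite /Bi RintegralD //; exact: measD. Qed.

Lemma BiZ k f : intg f -> Bi (fun u => k * f u) = k * Bi f.
Proof. by move=> hf; rewrite /Bi RintegralZl //; exact: measD. Qed.

Lemma IiZ z k f : 1 <= z -> intg f -> Ii z (fun u => k * f u) = k * Ii z f.
Proof.
move=> z1 hf; rewrite /Ii -RintegralZl //; last exact: intg_phi; last exact: measD.
by apply: eq_Rintegral => u _; rewrite mulrCA.
Qed.

Lemma le_comb z (f g h : R -> R) (c : R) : 1 <= z -> intg f -> intg g -> intg h ->
  (forall u, 0 < u -> phi z u * f u <= phi z u * g u + c * h u) ->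
  Ii z f <= Ii z g + c * Bi h.
Proof.
move=> z1 hf hg hh H.
rewrite /Ii /Bi -RintegralZl //; last exact: measD.
rewrite -RintegralD //; first last.
- exact: intgZ.
- exact: intg_phi.
- exact: measD.
apply: le_Rintegral; first exact: measD.
- exact: intg_phi.
- by apply: intgD; [exact: intg_phi | exact: intgZ].
by move=> u; rewrite /D /= in_itv /= andbT; exact: H.
Qed.

Lemma lb_Ii (f : R -> R) (a b m : R) z : 1 <= z -> intg f -> 0 < a -> a < b ->
  (forall u, 0 < u -> 0 <= f u) -> (forall u, a <= u -> u <= b -> m <= f u) -> 0 <= m ->
  Num.sqrt ((b * pi *+ 2)^-1) * expR (- z ^+ 2 / (a *+ 2)) * m * (b - a) <= Ii z f.
Proof.
move=> z1 hf a0 ab f0 fm m0.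
set c := Num.sqrt _ * _.
have c0 : 0 <= c by rewrite mulr_ge0 ?sqrtr_ge0 ?expR_ge0.
have hI : mu.-integrable D (EFin \o (fun u => phi z u * f u)) := intg_phi _ _ z1 hf.
rewrite /Ii /Rintegral -lee_fin fineK; last first. have := integrable_fin_num measD hI. exact.
pose W : set (measurableTypeR R) := `[a, b]%classic.
have mW : measurable W by exact: measurable_itv.
have WD : W `<=` D.
  move=> u; rewrite /W /D /= !in_itv /= andbT => /andP[au _].
  exact: lt_le_trans au.
have mf : measurable_fun D (EFin \o (fun u => phi z u * f u)) := measurable_int _ hI.
apply: (@le_trans _ _ (\int[mu]_(x in W) (phi z x * f x)%:E)%E); last first.
  apply: ge0_subset_integral => //; first exact: measD.
  move=> u; rewrite /D /= in_itv /= andbT => u0.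
  by rewrite lee_fin mulr_ge0 ?phi_ge0 ?f0.
apply: (@le_trans _ _ (\int[mu]_(x in W) (cst (c * m)%:E x))%E).
  rewrite integral_cst // /W.
  change ((c * m * (b - a))%:E <= (c * m)%:E * (@lebesgue_measure R) (`[a, b]%classic : set (measurableTypeR R)))%E.
  by rewrite lebesgue_measure_itv /= lte_fin ab -EFinB -EFinM.
have mfW : measurable_fun W (EFin \o (fun u => phi z u * f u)) by exact: (measurable_funS measD WD mf).
have mc : measurable_fun W (cst (c * m)%:E : R -> \bar R) by exact: measurable_cst.
apply: (ge0_le_integral mu mW _ mc mfW).
  by move=> u _; rewrite lee_fin mulr_ge0.
move=> u; rewrite /W /= in_itv /= => /andP[au ub].
rewrite lee_fin; apply: ler_pM => //.
  exact: phi_lb.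
exact: fm.
Qed.

Lemma window (f : R -> R) x0 e : 0 < e -> {within `]0, +oo[%classic, continuous f} ->
  0 < x0 -> exists2 d, 0 < d & forall u, `|x0 - u| < d -> f x0 - e <= f u.
Proof.
move=> e0 cf x00.
have Ax : (`]0, +oo[%classic : set R) x0 by rewrite /= in_itv /= andbT.
have Aint : (`]0, +oo[%classic : set R)° x0.
  by rewrite (interior_id _).1 //; exact: interval_open.
move: cf; rewrite continuous_subspace_in => /(_ x0).
rewrite inE => /(_ Ax).
rewrite /continuous_at -(nbhs_subspace_interior Aint) => cf.
move/cvgrPdist_lt: cf => /(_ e e0).
move=> /nbhs_ballP [d d0 Hd]; exists d => // u ud.
have := Hd u; rewrite /ball /= => /(_ ud) h.
by move: h; rewrite ltr_distlC => /andP[/ltW].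
Qed.

Lemma lower (f : R -> R) M : 0 < M -> {within `]0, +oo[%classic, continuous f} ->
  (forall u, 0 < u -> 0 < f u) -> intg f ->
  exists2 c0, 0 < c0 & forall z, 1 <= z -> c0 * expR (- z ^+ 2 / (M * 8)) <= Ii z f.
Proof.
move=> M0 cf fpos hf.
pose x0 := M * 4 + 1.
have x00 : 0 < x0 by rewrite addr_gt0 ?mulr_gt0.
have fx0 := fpos _ x00.
have e0 : 0 < f x0 / 2 by rewrite divr_gt0.
have [d d0 Hd] := window f x0 _ e0 cf x00.
pose d' := Num.min d 1 / 2.
have d'0 : 0 < d' by rewrite divr_gt0 // lt_min d0 ltr01.
have d'd : d' < d.
  rewrite /d' ltr_pdivrMr // (@le_lt_trans _ _ d) ?ge_min ?lexx //.
  by rewrite ltr_pMr // ltr1n.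
have d'1 : d' <= 1 / 2 by rewrite ler_pM2r // ge_min lexx orbT.
pose a := x0 - d'; pose b := x0 + d'.
have a4M : M * 4 <= a by rewrite /a /x0; lra.
have a0 : 0 < a by rewrite /a /x0; lra.
have ab : a < b by rewrite /a /b; lra.
pose m := f x0 / 2.
have fm : forall u, a <= u -> u <= b -> m <= f u.
  move=> u au ub; have := Hd u.
  rewrite (_ : f x0 - f x0 / 2 = m); last by rewrite /m; field.
  apply; rewrite (le_lt_trans _ d'd) //.
  by rewrite ler_norml; apply/andP; split; rewrite /a /b in au ub; lra.
exists (Num.sqrt ((b * pi *+ 2)^-1) * m * (b - a)).
  rewrite mulr_gt0 ?subr_gt0 // mulr_gt0 // ?sqrtr_gt0 ?invr_gt0 ?mulrn_wgt0 ?mulr_gt0 ?pi_gt0 //; lra.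
move=> z z1.
apply: (le_trans _ (lb_Ii _ _ _ _ _ z1 hf a0 ab _ fm _)); last first.
- by rewrite /m ltW.
- by move=> u /fpos /ltW.
set s := Num.sqrt _.
have hE : expR (- z ^+ 2 / (M * 8)) <= expR (- z ^+ 2 / (a *+ 2)).
  rewrite ler_expR !mulNr lerN2 ler_wpM2l ?sqr_ge0 // lef_pV2 ?posrE ?mulrn_wgt0 ?mulr_gt0 //.
  by rewrite -mulr_natr; lra.
have H0 : 0 <= s * m * (b - a).
  by rewrite mulr_ge0 ?subr_ge0 ?mulr_ge0 ?sqrtr_ge0 /m ?ltW.
apply: (le_trans (ler_wpM2l H0 hE)).
by rewrite [X in _ <= X](_ : _ = s * m * (b - a) * expR (- z ^+ 2 / (a *+ 2))) //; ring.
Qed.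

Lemma decay (M K eta : R) : 0 < M -> 0 < eta ->
  \forall z \near +oo%R, 1 <= (z : R) /\ K * expR (- z ^+ 2 / (M * 8)) <= eta.
Proof.
move=> M0 eta0.
near=> z.
have z1 : 1 <= z by near: z; apply: nbhs_pinfty_ge; rewrite num_real.
have zK : `|K| * (M * 8) / eta <= z by near: z; apply: nbhs_pinfty_ge; rewrite num_real.
split => //.
have z0 : 0 < z by lra.
set x := z ^+ 2 / (M * 8).
have x0 : 0 < x by rewrite divr_gt0 ?exprn_gt0 ?mulr_gt0.
have ex : expR (- x) <= x^-1.
  rewrite expRN lef_pV2 ?posrE ?expR_gt0 //.
  by apply: le_trans (expR_ge1Dx x); lra.
rewrite mulNr.
apply: (le_trans (ler_norm _)); rewrite normrM (ger0_norm (expR_ge0 _)).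
apply: (le_trans (ler_wpM2l (normr_ge0 _) ex)).
rewrite /x invf_div mulrA ler_pdivrMr ?exprn_gt0 //.
rewrite ler_pdivrMr // in zK.
have : `|K| * (M * 8) <= z * eta by [].
have : z * eta <= z ^+ 2 * eta by rewrite ler_pM2r // expr2 ler_peMr // ltW.
move=> h1 h2; rewrite mulrA; lra.
Unshelve. all: by end_near.
Qed.

Lemma ratio_bound (r e I1 I2 X : R) : 0 < I1 -> I2 <= (r + e / 2) * I1 + X ->
  (r - e / 2) * I1 <= I2 + X -> X <= e / 2 * I1 -> `|r - I2 / I1| <= e.
Proof.
move=> I10 h1 h2 h3.
have hq : I2 = I2 / I1 * I1 by rewrite divfK // gt_eqF.
rewrite hq mulfK ?gt_eqF //; move: h1 h2; rewrite hq; move: (I2 / I1) => q h1 h2.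
have u1 : q * I1 <= (r + e) * I1 by lra.
have u2 : (r - e) * I1 <= q * I1 by lra.
rewrite ler_pM2r // in u1; rewrite ler_pM2r // in u2.
rewrite mulfK ?gt_eqF // ler_norml; apply/andP; split; lra.
Qed.

Lemma eE (z M : R) : 0 < M ->
  expR (- z ^+ 2 / (M * 4)) = expR (- z ^+ 2 / (M * 8)) * expR (- z ^+ 2 / (M * 8)).
Proof. by move=> M0; rewrite -expRD; congr expR; field; rewrite gt_eqF. Qed.

Lemma Bi_ge0 f : (forall u, 0 < u -> 0 <= f u) -> 0 <= Bi f.
Proof.
move=> f0; apply: Rintegral_ge0 => u.
by rewrite /D /= in_itv /= andbT; exact: f0.
Qed.

End S.

Theorem lemmaS5 (R : realType) (alpha beta : R -> R) (rho : \bar R) :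
  {within `]0, +oo[%classic, continuous alpha} ->
  {within `]0, +oo[%classic, continuous beta} ->
  (forall u : R, 0 < u -> 0 < alpha u) ->
  (forall u : R, 0 < u -> 0 < beta u) ->
  (@lebesgue_measure R).-integrable `]0, +oo[%classic (EFin \o alpha) ->
  (@lebesgue_measure R).-integrable `]0, +oo[%classic (EFin \o beta) ->
  (0 <= rho)%E ->
  (beta u / alpha u)%:E @[u --> +oo%R] --> rho ->
  (Rintegral (@lebesgue_measure R) `]0, +oo[%classic (fun u => phi z u * beta u)
   / Rintegral (@lebesgue_measure R) `]0, +oo[%classic (fun u => phi z u * alpha u))%:E
    @[z --> +oo%R] --> rho.
Proof.
move=> ca cb pa pb ia ib rho0 hlim.
have iA : intg alpha := ia.
have iB : intg beta := ib.
suff : (Ii z beta / Ii z alpha)%:E @[z --> +oo%R] --> rho by [].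
have Ba0 : 0 <= Bi alpha by apply: Bi_ge0 => u /pa /ltW.
have Bb0 : 0 <= Bi beta by apply: Bi_ge0 => u /pb /ltW.
case: rho rho0 hlim => [r| |] //; rewrite ?lee_fin => r0 hlim.
- apply/fine_cvgP; split; first exact: nearW.
  apply/cvgrPdist_le => e e0 /=.
  have e20 : 0 < e / 2 by rewrite divr_gt0.
  move/fine_cvgP: hlim => [_ /cvgrPdist_le /(_ _ e20)] [M0 [_ HM0]].
  pose M := Num.max M0 1.
  have M0' : 0 < M by rewrite lt_max ltr01 orbT.
  have HM : forall u, M < u -> `|r - beta u / alpha u| <= e / 2.
    by move=> u; rewrite gt_max => /andP[h _]; exact: HM0.
  have [c0 c00 Hlow] := lower alpha M M0' ca pa iA.
  pose C := Bi beta + r * Bi alpha.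
  have C0 : 0 <= C by rewrite addr_ge0 // mulr_ge0.
  near=> z.
  have [z1 hdec] : 1 <= z /\ C / c0 * expR (- z ^+ 2 / (M * 8)) <= e / 2.
    by near: z; exact: decay.
  set E := expR (- z ^+ 2 / (M * 8)).
  have E0 : 0 < E by exact: expR_gt0.
  have hI1 := Hlow z z1; rewrite -/E in hI1.
  have I10 : 0 < Ii z alpha by apply: lt_le_trans hI1; rewrite mulr_gt0.
  set e1 := expR (- z ^+ 2 / (M * 4)).
  have e1E : e1 = E * E by rewrite /e1 eE.
  have phM : forall u, 0 < u -> u <= M -> phi z u <= e1.
    by move=> u u0 uM; exact: phi_ubM.
  apply: (@ratio_bound _ r e _ _ (e1 * C)) => //.
  + rewrite -(IiZ _ _ _ z1 iA) /C -(BiZ r alpha iA) -BiD //; last exact: intgZ.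
    apply: le_comb => //; first exact: intgZ; first by apply: intgD => //; exact: intgZ.
    move=> u u0; have au := pa u u0; have bu := pb u u0.
    have hp := phi_ge0 z u.
    have au' := ltW au; have bu' := ltW bu.
    have re : 0 <= r + e / 2 by lra.
    have e0' := ltW e0.
    have e10 : 0 <= e1 by exact: expR_ge0.
    have [uM|Mu] := leP u M.
      have pe := phM u u0 uM.
      have a1 : phi z u * beta u <= e1 * beta u by rewrite ler_wpM2r.
      have a2 : 0 <= phi z u * ((r + e / 2) * alpha u) by rewrite !mulr_ge0.
      have a3 : 0 <= e1 * (r * alpha u) by rewrite !mulr_ge0.
      lra.
    have := HM u Mu; rewrite ler_distlC => /andP[_ h].
    rewrite ler_pdivrMr // in h.
    have a1 := ler_wpM2l hp h.
    have a3 : 0 <= e1 * (beta u + r * alpha u) by rewrite mulr_ge0 // addr_ge0 // mulr_ge0.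
    lra.
  + rewrite -(IiZ _ _ _ z1 iA) /C -(BiZ r alpha iA) -BiD //; last exact: intgZ.
    apply: le_comb => //; first exact: intgZ; first by apply: intgD => //; exact: intgZ.
    move=> u u0; have au := pa u u0; have bu := pb u u0.
    have hp := phi_ge0 z u.
    have au' := ltW au; have bu' := ltW bu.
    have re : 0 <= r + e / 2 by lra.
    have e0' := ltW e0.
    have e10 : 0 <= e1 by exact: expR_ge0.
    have [uM|Mu] := leP u M.
      have pe := phM u u0 uM.
      have a1 : 0 <= phi z u * alpha u * e by rewrite !mulr_ge0.
      have a2 : phi z u * (r * alpha u) <= e1 * (r * alpha u) by rewrite ler_wpM2r // mulr_ge0.
      have a3 : 0 <= phi z u * beta u by rewrite mulr_ge0.
      have a4 : 0 <= e1 * beta u by rewrite mulr_ge0.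
      lra.
    have := HM u Mu; rewrite ler_distlC => /andP[h _].
    rewrite ler_pdivlMr // in h.
    have a1 := ler_wpM2l hp h.
    have a3 : 0 <= e1 * (beta u + r * alpha u) by rewrite mulr_ge0 // addr_ge0 // mulr_ge0.
    lra.
  + rewrite e1E.
    have : C / c0 * E * (E * c0) <= e / 2 * (E * c0).
      by rewrite ler_pM2r ?mulr_gt0.
    have : e / 2 * (E * c0) <= e / 2 * Ii z alpha.
      by rewrite ler_pM2l // mulrC.
    move=> h1 h2; apply: le_trans h1; apply: le_trans h2.
    by rewrite le_eqVlt; apply/orP; left; apply/eqP; field; rewrite gt_eqF.
- apply/cvgeryP/cvgryPge => A.
  have A0 : 0 < (`|A| + 1) * 2 by rewrite mulr_gt0 // ltr_pwDr.
  move/cvgeryP/cvgryPge: hlim => /(_ ((`|A| + 1) * 2)) [M0 [_ HM0]].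
  pose M := Num.max M0 1.
  have M0' : 0 < M by rewrite lt_max ltr01 orbT.
  have HM : forall u, M < u -> (`|A| + 1) * 2 <= beta u / alpha u.
    by move=> u; rewrite gt_max => /andP[h _]; exact: HM0.
  have [c0 c00 Hlow] := lower alpha M M0' ca pa iA.
  near=> z.
  have [z1 hdec] : 1 <= z /\ Bi alpha / c0 * expR (- z ^+ 2 / (M * 8)) <= 1 / 2.
    by near: z; exact: decay.
  set E := expR (- z ^+ 2 / (M * 8)).
  have E0 : 0 < E by exact: expR_gt0.
  have hI1 := Hlow z z1; rewrite -/E in hI1.
  have I10 : 0 < Ii z alpha by apply: lt_le_trans hI1; rewrite mulr_gt0.
  set e1 := expR (- z ^+ 2 / (M * 4)).
  have e1E : e1 = E * E by rewrite /e1 eE.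
  have e10 : 0 <= e1 by exact: expR_ge0.
  have phM : forall u, 0 < u -> u <= M -> phi z u <= e1.
    by move=> u u0 uM; exact: phi_ubM.
  have key : Ii z (fun u => (`|A| + 1) * 2 * alpha u) <=
      Ii z beta + e1 * Bi (fun u => (`|A| + 1) * 2 * alpha u).
    apply: le_comb => //; [exact: intgZ | exact: intgZ |].
    move=> u u0; have au := pa u u0; have bu := pb u u0.
    have hp := phi_ge0 z u.
    have au' := ltW au; have bu' := ltW bu.
    have [uM|Mu] := leP u M.
      have pe := phM u u0 uM.
      have a1 : phi z u * ((`|A| + 1) * 2 * alpha u) <= e1 * ((`|A| + 1) * 2 * alpha u).
        by rewrite ler_wpM2r // mulr_ge0 // ltW.
      have a3 : 0 <= phi z u * beta u by rewrite mulr_ge0.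
      lra.
    have h := HM u Mu; rewrite ler_pdivlMr // in h.
    have a1 := ler_wpM2l hp h.
    have a3 : 0 <= e1 * ((`|A| + 1) * 2 * alpha u) by rewrite !mulr_ge0 // ltW.
    lra.
  rewrite (IiZ _ _ _ z1 iA) (BiZ _ _ iA) in key.
  have hB : e1 * Bi alpha <= 1 / 2 * Ii z alpha.
    rewrite e1E.
    have : Bi alpha / c0 * E * (E * c0) <= 1 / 2 * (E * c0).
      by rewrite ler_pM2r ?mulr_gt0.
    have : 1 / 2 * (E * c0) <= 1 / 2 * Ii z alpha.
      by rewrite ler_pM2l // mulrC.
    move=> h1 h2; apply: le_trans h1; apply: le_trans h2.
    by rewrite le_eqVlt; apply/orP; left; apply/eqP; field; rewrite gt_eqF.
  have hB2 := ler_wpM2l (ltW A0) hB.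
  have hA : A * Ii z alpha <= `|A| * Ii z alpha by rewrite ler_wpM2r ?(ltW I10) // ler_norm.
  rewrite ler_pdivlMr //.
  have : e1 * ((`|A| + 1) * 2 * Bi alpha) = (`|A| + 1) * 2 * (e1 * Bi alpha) by ring.
  lra.
Unshelve. all: by end_near.
Qed.
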